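(* For every $n\ge 3$, all nonnegative integers $l_1,\dots,l_n,l_\infty$, and every $i$ with $2\le i\le n-1$, the elements $s_{i,i+1}s_{i-1,i}s_{i,i+1}$ and $s_{i-1,i}s_{i,i+1}s_{i-1,i}$ of $J_n$ act identically on $X(l_1,\dots,l_n,l_\infty)$.
   Context: Cactus group: $J_n$ is the group generated by $s_{p,q}$, $1\le p<q\le n$, subject to the relations $s_{p,q}^2=e$; $s_{p,q}s_{p',q'}=s_{p',q'}s_{p,q}$ if $[p,q]$ and $[p',q']$ are disjoint; $s_{p,q}s_{p',q'}s_{p,q}=s_{p+q-q',p+q-p'}$ if $p\le p'<q'\le q$. Arc diagrams: fix nonnegative integers $l_1,\dots,l_n,l_\infty$. On the boundary circle of a closed disc place $n+1$ marked positions: position $0$ (occupied by $z_\infty$) and positions $1,\dots,n$ following it clockwise. An arc diagram is a bijective assignment of labels $z_1,\dots,z_n$ to positions $1,\dots,n$ together with a finite collection of simple arcs in the disc, pairwise disjoint except at endpoints, each joining two distinct marked points, such that $z_j$ is an endpoint of exactly $l_j$ arcs ($j\in\{1,\dots,n,\infty\}$; $l_j$ is the valence). Parallel arcs are allowed; diagrams are up to isotopy, equivalently determined by the labelling and the number of arcs between each pair of marked points. $X(l_1,\dots,l_n,l_\infty)$ is the set of such diagrams. Action: $s_{p,q}$ ($1\le p<q\le n$) acts by cutting off positions $p,\dots,q$ with a chord $\ell$ (arcs isotoped to cross $\ell$ at most once), reflecting that region by the reflection reversing $\ell$ (label at position $p+t$ goes to position $q-t$, crossing points on $\ell$ reversed),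 leaving the rest unchanged and reconnecting arcs at $\ell$. Words act right to left; this is an action of $J_n$. *)

(* Defs.v *)
From mathcomp Require Import all_boot all_order.
Set Implicit Arguments. Unset Strict Implicit. Unset Printing Implicit Defensive.

(* Marked positions on the circle: 'I_n.+1, position 0 is the one of z_oo,
   positions 1..n follow clockwise.  Labels are also coded by 'I_n.+1:
   label 0 stands for z_oo and label j (1 <= j <= n) for z_j. *)

(* A (raw) arc diagram: the labelling (position |-> label) and the number of
   arcs between each (ordered) pair of positions. *)
Record diagram (n : nat) := Diagram {
  dlab : {ffun 'I_n.+1 -> 'I_n.+1};
  darc : {ffun 'I_n.+1 * 'I_n.+1 -> nat}
}.

(* D is an element of X(l_1,...,l_n,l_oo), where the valences are coded by
   l : 'I_n.+1 -> nat with l 0 = l_oo and l j = l_j. *)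
Definition is_diagram n (l : 'I_n.+1 -> nat) (D : diagram n) : Prop :=
  injective (dlab D) /\ dlab D ord0 = ord0 /\
  [/\
      (forall a b, darc D (a, b) = darc D (b, a)),
      (forall a, darc D (a, a) = 0),
      (forall a b c d : 'I_n.+1,
          (a < b)%N -> (b < c)%N -> (c < d)%N ->
          darc D (a, c) = 0 \/ darc D (b, d) = 0)
    & (forall a, \sum_(b < n.+1) darc D (a, b) = l (dlab D a))].

Section Action.
Variable n : nat.
Variables p q : nat.

(* positions cut off by the chord ell *)
Definition inside (x : 'I_n.+1) : bool := (p <= x <= q)%N.

Definition refl (x : 'I_n.+1) : 'I_n.+1 :=
  if inside x then inord (p + q - x) else x.

Definition inside_asc : seq 'I_n.+1 := filter inside (enum 'I_n.+1).

(* outside positions listed counterclockwise from p-1: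
   p-1, ..., 1, 0, n, ..., q+1 *)
Definition outside_desc : seq 'I_n.+1 :=
  rev (filter (fun y : 'I_n.+1 => (q < y)%N) (enum 'I_n.+1) ++ filter (fun y : 'I_n.+1 => (y < p)%N) (enum 'I_n.+1)).

(* The arcs crossing ell, as (inside endpoint, outside endpoint), listed in the
   order of their crossing points along ell starting from the end of ell
   next to position p (for a non-crossing diagram these arcs are nested). *)
Definition cross_list (m : {ffun 'I_n.+1 * 'I_n.+1 -> nat}) :
    seq ('I_n.+1 * 'I_n.+1) :=
  flatten [seq flatten [seq nseq (m (x, y)) (x, y) | y <- outside_desc]
          | x <- inside_asc].

(* After reflecting the cut-off region, the crossing points on ell are
   reversed: at the k-th crossing point the outside half of the k-th old arc
   is reconnected with the reflected inside half of the (K+1-k)-th old arc. *)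
Definition new_cross (m : {ffun 'I_n.+1 * 'I_n.+1 -> nat}) :
    seq ('I_n.+1 * 'I_n.+1) :=
  let C := cross_list m in
  zip (map (fun c => refl c.1) (rev C)) (map snd C).

Definition act (D : diagram n) : diagram n :=
  let m := darc D in
  Diagram [ffun x => dlab D (refl x)]
    [ffun e : 'I_n.+1 * 'I_n.+1 =>
       let a := e.1 in let b := e.2 in
       if inside a && inside b then m (refl a, refl b)
       else if ~~ inside a && ~~ inside b then m (a, b)
       else if inside a then count_mem (a, b) (new_cross m)
       else count_mem (b, a) (new_cross m)].

End Action.

(* Main.v *)
Require Import Defs.
From mathcomp Require Import all_boot all_order zify.
Set Implicit Arguments. Unset Strict Implicit. Unset Printing Implicit Defensive.


Definition Fl (T : eqType) (L : seq T) (f : T -> nat) : seq T :=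
  flatten [seq nseq (f y) y | y <- L].

Definition fsorted (T : eqType) (L : seq T) (R : seq T) :=
  exists f, R = Fl L f.

Lemma take_cat' (T : Type) k (s1 s2 : seq T) :
  take k (s1 ++ s2) = take k s1 ++ take (k - size s1) s2.
Proof.
rewrite take_cat; case: ltnP => H.
  have -> : k - size s1 = 0 by lia.
  by rewrite take0 cats0.
by rewrite (take_oversize H).
Qed.

Lemma drop_cat' (T : Type) k (s1 s2 : seq T) :
  drop k (s1 ++ s2) = drop k s1 ++ drop (k - size s1) s2.
Proof.
rewrite drop_cat; case: ltnP => H.
  have -> : k - size s1 = 0 by lia.
  by rewrite drop0.
by rewrite (drop_oversize H).
Qed.

Lemma take_nseq' (T : Type) k c (x : T) : take k (nseq c x) = nseq (minn k c) x.
Proof.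
case: (leqP k c) => H.
  by rewrite take_nseq // (minn_idPl H).
by rewrite take_oversize ?size_nseq ?(ltnW H) // (minn_idPr (ltnW H)).
Qed.

Lemma count_nseq' (T : eqType) (t x : T) c :
  count_mem t (nseq c x) = (x == t) * c.
Proof. by rewrite count_nseq. Qed.

Lemma Fl_cons (T : eqType) t L (f : T -> nat) :
  Fl (t :: L) f = nseq (f t) t ++ Fl L f.
Proof. by []. Qed.

Lemma Fl_eq_in (T : eqType) (L : seq T) f g :
  {in L, f =1 g} -> Fl L f = Fl L g.
Proof.
move=> H; rewrite /Fl; congr flatten; apply/eq_in_map => y Hy.
by rewrite H.
Qed.

Lemma Fl_mem (T : eqType) (L : seq T) f t : t \in Fl L f -> t \in L.
Proof.
elim: L => //= y L IH; rewrite mem_cat in_cons => /orP[|/IH ->]; last by rewrite orbT.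
by move/nseqP => [-> _]; rewrite eqxx.
Qed.

Lemma count_Fl (T : eqType) (L : seq T) f t :
  uniq L -> count_mem t (Fl L f) = if t \in L then f t else 0.
Proof.
elim: L => //= y L IH /andP[HyL HL].
rewrite count_cat count_nseq IH // in_cons.
case: (eqVneq y t) => [<-|Hne] /=.
  by rewrite (negPf HyL) addn0 eqxx mul1n.
by rewrite (negPf Hne) mul0n add0n.
Qed.

Lemma fsortedE (T : eqType) (L R : seq T) :
  uniq L -> fsorted L R -> R = Fl L (fun y => count_mem y R).
Proof.
move=> U [f ->]; apply: Fl_eq_in => y Hy.
by rewrite count_Fl // Hy.
Qed.

Lemma fsorted_take (T : eqType) (L R : seq T) k :
  uniq L -> fsorted L R -> fsorted L (take k R).
Proof.
move=> U [f ->]; elim: L U k f => [|t L IH] /= U k f.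
  by exists f; rewrite /Fl /=.
case/andP: U => HtL U.
rewrite Fl_cons take_cat' take_nseq' size_nseq.
have [g Hg] := IH U (k - f t) f.
exists (fun y => if y == t then minn k (f t) else g y).
rewrite Fl_cons eqxx Hg; congr (_ ++ _); apply: Fl_eq_in => y Hy.
by case: eqP => // E; rewrite -E Hy in HtL.
Qed.

Lemma fsorted_drop (T : eqType) (L R : seq T) k :
  uniq L -> fsorted L R -> fsorted L (drop k R).
Proof.
move=> U [f ->]; elim: L U k f => [|t L IH] /= U k f.
  by exists f; rewrite /Fl /=.
case/andP: U => HtL U.
rewrite Fl_cons drop_cat' drop_nseq size_nseq.
have [g Hg] := IH U (k - f t) f.
exists (fun y => if y == t then f t - k else g y).
rewrite Fl_cons eqxx Hg; congr (_ ++ _); apply: Fl_eq_in => y Hy.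
by case: eqP => // E; rewrite -E Hy in HtL.
Qed.

Lemma Fl_zero (T : eqType) (L : seq T) f : {in L, forall y, f y = 0} -> Fl L f = [::].
Proof.
move=> H; rewrite (@Fl_eq_in _ _ _ (fun _ => 0)) //.
by elim: L {H} => //.
Qed.

Lemma Fl_merge (T : eqType) (L : seq T) f g :
  pairwise (fun t t' => (g t == 0) || (f t' == 0)) L ->
  Fl L f ++ Fl L g = Fl L (fun y => f y + g y).
Proof.
elim: L => [|t L IH] //= /andP[Hall Hpw].
rewrite !Fl_cons.
case: (eqVneq (g t) 0) => Hg.
  by rewrite Hg addn0 /= -catA IH.
have Hf : {in L, forall y, f y = 0}.
  move=> y Hy; move/allP: Hall => /(_ y Hy) /=.
  by rewrite (negPf Hg) /= => /eqP.
rewrite (Fl_zero Hf) cats0 nseqD -catA; congr (_ ++ _); congr (_ ++ _).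
by apply: Fl_eq_in => y Hy; rewrite Hf.
Qed.


Lemma filter_none (T : eqType) (p : pred T) (s : seq T) :
  (forall x, x \in s -> ~~ p x) -> filter p s = [::].
Proof.
elim: s => //= y s IH H.
rewrite (negPf (H y (mem_head _ _))) IH // => x Hx.
by apply: H; rewrite in_cons Hx orbT.
Qed.

Lemma filter_iota_int m k N : m <= k <= N ->
  [seq x <- iota 0 N | m <= x < k] = iota m (k - m).
Proof.
move=> /andP[H1 H2].
have E : N = m + (k - m + (N - k)) by lia.
rewrite {1}E iotaD iotaD add0n.
have -> : m + (k - m) = k by lia.
rewrite !filter_cat.
rewrite (@filter_none _ _ (iota 0 m)); last by move=> x; rewrite mem_iota; lia.
rewrite (@filter_none _ _ (iota k _)); last by move=> x; rewrite mem_iota; lia.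
rewrite cats0 /=; apply/all_filterP/allP => x; rewrite mem_iota; lia.
Qed.

Lemma map_val_filter n (P : nat -> bool) :
  map val [seq x <- enum 'I_n.+1 | P (val x)] = [seq x <- iota 0 n.+1 | P x].
Proof. by rewrite -val_enum_ord filter_map. Qed.

Lemma inside_asc_eq n p : p.+1 <= n ->
  inside_asc n p p.+1 = [:: inord p; inord p.+1].
Proof.
move=> Hp; apply: (inj_map val_inj).
rewrite /inside_asc /inside (map_val_filter n (fun y => p <= y <= p.+1)) [RHS]/=.
rewrite !inordK; [|lia|lia].
rewrite (@eq_filter _ _ (fun x => p <= x < p.+2)); last by move=> x; lia.
rewrite filter_iota_int; last by lia.
by have -> : p.+2 - p = 2 by lia.
Qed.

Lemma outside_desc_val n p q : p <= q <= n ->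
  map val (outside_desc n p q) = rev (iota q.+1 (n - q) ++ iota 0 p).
Proof.
move=> H; rewrite /outside_desc map_rev map_cat.
rewrite (map_val_filter n (fun y => q < y)) (map_val_filter n (fun y => y < p)).
rewrite (@eq_in_filter _ (fun y => q < y) (fun x => q.+1 <= x < n.+1)); last first.
  by move=> x; rewrite mem_iota; lia.
rewrite (@eq_filter _ (fun y => y < p) (fun x => 0 <= x < p)); last by move=> x; lia.
rewrite !filter_iota_int; [|lia|lia].
by rewrite subn0 subSS.
Qed.

Definition pu n i : 'I_n.+1 := inord i.-1.
Definition pv n i : 'I_n.+1 := inord i.
Definition pw n i : 'I_n.+1 := inord i.+1.
Definition od3 n i : seq 'I_n.+1 := outside_desc n i.-1 i.+1.

Lemma mem_od3 n i (t : 'I_n.+1) : 2 <= i -> i.+1 <= n ->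
  (t \in od3 n i) = (t < i.-1) || (i.+1 < t).
Proof.
move=> H1 Hn.
rewrite -(mem_map val_inj) /od3 outside_desc_val; last by lia.
rewrite mem_rev mem_cat !mem_iota /=; have := ltn_ord t; lia.
Qed.

Lemma uniq_od3 n i : 2 <= i -> i.+1 <= n -> uniq (od3 n i).
Proof.
move=> H1 Hn.
rewrite -(map_inj_uniq val_inj) /od3 outside_desc_val; last by lia.
rewrite rev_uniq cat_uniq !iota_uniq /= andbT.
apply/hasPn => x; rewrite !mem_iota => H; lia.
Qed.

Lemma val_pu n i : 2 <= i -> i.+1 <= n -> val (pu n i) = i.-1.
Proof. move=> *; apply: inordK; lia. Qed.
Lemma val_pv n i : 2 <= i -> i.+1 <= n -> val (pv n i) = i.
Proof. move=> *; apply: inordK; lia. Qed.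
Lemma val_pw n i : 2 <= i -> i.+1 <= n -> val (pw n i) = i.+1.
Proof. move=> *; apply: inordK; lia. Qed.

Lemma od_T n i : 2 <= i -> i.+1 <= n ->
  outside_desc n i i.+1 = pu n i :: od3 n i.
Proof.
move=> H1 H2; apply: (inj_map val_inj).
rewrite [RHS]/= /od3 !outside_desc_val; [|lia|lia].
rewrite val_pu //.
have E : iota 0 i = iota 0 i.-1 ++ [:: i.-1].
  by rewrite -{1}(prednK (ltnW H1)) -addn1 iotaD.
by rewrite E catA rev_cat.
Qed.

Lemma od_U n i : 2 <= i -> i.+1 <= n ->
  outside_desc n i.-1 i = rcons (od3 n i) (pw n i).
Proof.
move=> H1 H2; apply: (inj_map val_inj).
rewrite map_rcons /od3 !outside_desc_val; [|lia|lia].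
rewrite val_pw //.
have -> : n - i = (n - i.+1).+1 by lia.
by rewrite [iota i.+1 _]/= rev_cons.
Qed.

Lemma classify n i (r : 'I_n.+1) : 2 <= i -> i.+1 <= n ->
  [\/ r = pu n i, r = pv n i, r = pw n i | r \in od3 n i].
Proof.
move=> H1 H2; rewrite mem_od3 //.
have : nat_of_ord r = i.-1 \/ nat_of_ord r = i \/ nat_of_ord r = i.+1 \/
  ((r < i.-1) || (i.+1 < r)) by lia.
case=> [E|[E|[E|E]]]; [apply: Or41|apply: Or42|apply: Or43|by apply: Or44];
  apply: val_inj; rewrite /= E inordK //; lia.
Qed.


Lemma flatten_pair (T1 T2 : eqType) (x : T1) (s : seq T2) (k : T2 -> nat) :
  flatten [seq nseq (k y) (x, y) | y <- s] = map (pair x) (Fl s k).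
Proof. by elim: s => //= y s IH; rewrite map_cat IH map_nseq. Qed.

Lemma map_fst_rev (T1 T2 U : Type) (f : T1 -> U) (x : T1) (s : seq T2) :
  map (fun c => f c.1) (rev (map (pair x) s)) = nseq (size s) (f x).
Proof.
rewrite map_rev -rev_nseq; congr rev.
by elim: s => //= y s ->.
Qed.

Lemma map_snd_pair (T1 T2 : Type) (x : T1) (s : seq T2) :
  map snd (map (pair x) s) = s.
Proof. by elim: s => //= y s ->. Qed.

Lemma zip_nseq_map (T1 T2 : Type) (x : T1) (s : seq T2) :
  zip (nseq (size s) x) s = map (pair x) s.
Proof. by elim: s => //= y s ->. Qed.

Lemma count_pair (T1 T2 : eqType) (x a : T1) (b : T2) s :
  count_mem (a, b) (map (pair x) s) = (x == a) * count_mem b s.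
Proof.
elim: s => [|y s IH] /=; first by rewrite muln0.
rewrite IH xpair_eqE.
by case: (x == a); rewrite ?mul1n ?mul0n //= mulnDr muln1.
Qed.

Lemma count_zip2 (T1 T2 : eqType) (P P1 a : T1) (b : T2) k j (S : seq T2) :
  P != P1 -> k + j = size S ->
  count_mem (a, b) (zip (nseq k P ++ nseq j P1) S) =
  (P == a) * count_mem b (take k S) + (P1 == a) * count_mem b (drop k S).
Proof.
move=> HP Hs.
have Hk : size (take k S) = k by rewrite size_take; case: ltnP => //; lia.
have Hj : size (drop k S) = j by rewrite size_drop; lia.
rewrite -{1}(cat_take_drop k S) zip_cat ?size_nseq //.
rewrite -{1}Hk -{1}Hj !zip_nseq_map count_cat !count_pair //.
Qed.

Lemma inside_eq n p (x : 'I_n.+1) : p.+1 <= n ->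
  inside p p.+1 x = (x == inord p) || (x == inord p.+1).
Proof.
move=> Hp; rewrite /inside -!(inj_eq val_inj) /= !inordK; lia.
Qed.

Lemma refl_P n p : p.+1 <= n -> refl p p.+1 (inord p : 'I_n.+1) = inord p.+1.
Proof.
move=> Hp; rewrite /refl /inside inordK; last by lia.
by rewrite leqnn leqnSn /=; congr inord; lia.
Qed.

Lemma refl_P1 n p : p.+1 <= n -> refl p p.+1 (inord p.+1 : 'I_n.+1) = inord p.
Proof.
move=> Hp; rewrite /refl /inside inordK; last by lia.
by rewrite leqnn leqnSn /=; congr inord; lia.
Qed.

Lemma refl_out n p q (x : 'I_n.+1) : ~~ inside p q x -> refl p q x = x.
Proof. by rewrite /refl => /negPf ->. Qed.

Definition SPo n p (m : {ffun 'I_n.+1 * 'I_n.+1 -> nat}) (x : 'I_n.+1) :=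
  Fl (outside_desc n p p.+1) (fun y => m (x, y)).

Lemma new_cross_eq n p (m : {ffun 'I_n.+1 * 'I_n.+1 -> nat}) : p.+1 <= n ->
  new_cross p p.+1 m =
  zip (nseq (size (SPo p m (inord p.+1))) (inord p) ++
       nseq (size (SPo p m (inord p))) (inord p.+1))
      (SPo p m (inord p) ++ SPo p m (inord p.+1)).
Proof.
move=> Hp.
rewrite /new_cross /cross_list inside_asc_eq //= cats0 !flatten_pair.
rewrite map_cat map_snd_pair map_snd_pair rev_cat map_cat !map_fst_rev.
by rewrite refl_P // refl_P1.
Qed.

Lemma P_neq n p : p.+1 <= n -> (inord p : 'I_n.+1) != inord p.+1.
Proof. by move=> Hp; rewrite -(inj_eq val_inj) /= !inordK //; lia. Qed.

Lemma inside_P n p : p.+1 <= n -> inside p p.+1 (inord p : 'I_n.+1).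
Proof. by move=> Hp; rewrite inside_eq // eqxx. Qed.
Lemma inside_P1 n p : p.+1 <= n -> inside p p.+1 (inord p.+1 : 'I_n.+1).
Proof. by move=> Hp; rewrite inside_eq // eqxx orbT. Qed.

Lemma act_out n p q (D : diagram n) r s :
  ~~ inside p q r -> ~~ inside p q s -> darc (act p q D) (r, s) = darc D (r, s).
Proof. by move=> Hr Hs; rewrite /act ffunE /= (negPf Hr) (negPf Hs). Qed.

Lemma act_in n p q (D : diagram n) r s :
  inside p q r -> inside p q s -> darc (act p q D) (r, s) = darc D (refl p q r, refl p q s).
Proof. by move=> Hr Hs; rewrite /act ffunE /= Hr Hs. Qed.

Lemma act_lab n p q (D : diagram n) x : dlab (act p q D) x = dlab D (refl p q x).
Proof. by rewrite /act ffunE. Qed.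

Definition Sfull n p (D : diagram n) :=
  SPo p (darc D) (inord p) ++ SPo p (darc D) (inord p.+1).
Definition beta n p (D : diagram n) := size (SPo p (darc D) (inord p.+1)).

Lemma act_cross n p (D : diagram n) (a s : 'I_n.+1) : p.+1 <= n ->
  inside p p.+1 a -> ~~ inside p p.+1 s ->
  darc (act p p.+1 D) (a, s) =
    (inord p == a) * count_mem s (take (beta p D) (Sfull p D)) +
    (inord p.+1 == a) * count_mem s (drop (beta p D) (Sfull p D)) /\
  darc (act p p.+1 D) (s, a) =
    (inord p == a) * count_mem s (take (beta p D) (Sfull p D)) +
    (inord p.+1 == a) * count_mem s (drop (beta p D) (Sfull p D)).
Proof.
move=> Hp Ha Hs.
rewrite /act !ffunE /= Ha (negPf Hs) /=.
rewrite new_cross_eq // !count_zip2 ?P_neq //.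
by rewrite /Sfull size_cat addnC.
Qed.

Lemma act_crossP n p (D : diagram n) (s : 'I_n.+1) : p.+1 <= n -> ~~ inside p p.+1 s ->
  darc (act p p.+1 D) (inord p, s) = count_mem s (take (beta p D) (Sfull p D)) /\
  darc (act p p.+1 D) (s, inord p) = count_mem s (take (beta p D) (Sfull p D)).
Proof.
move=> Hp Hs; have [-> ->] := act_cross D Hp (inside_P Hp) Hs.
by rewrite eqxx eq_sym (negPf (P_neq Hp)) mul1n mul0n addn0.
Qed.

Lemma act_crossP1 n p (D : diagram n) (s : 'I_n.+1) : p.+1 <= n -> ~~ inside p p.+1 s ->
  darc (act p p.+1 D) (inord p.+1, s) = count_mem s (drop (beta p D) (Sfull p D)) /\
  darc (act p p.+1 D) (s, inord p.+1) = count_mem s (drop (beta p D) (Sfull p D)).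
Proof.
move=> Hp Hs; have [-> ->] := act_cross D Hp (inside_P1 Hp) Hs.
by rewrite eqxx (negPf (P_neq Hp)) mul1n mul0n.
Qed.


(* positions with j = i - 1:  u = j, v = j+1, w = j+2 *)
Definition U3 n j : 'I_n.+1 := inord j.
Definition V3 n j : 'I_n.+1 := inord j.+1.
Definition W3 n j : 'I_n.+1 := inord j.+2.
Definition O3 n j : seq 'I_n.+1 := outside_desc n j j.+2.

Lemma mem_O3 n j (t : 'I_n.+1) : 1 <= j -> j.+2 <= n ->
  (t \in O3 n j) = (t < j) || (j.+2 < t).
Proof. move=> H1 H2; exact: (@mem_od3 n j.+1 t). Qed.

Lemma uniq_O3 n j : 1 <= j -> j.+2 <= n -> uniq (O3 n j).
Proof. move=> H1 H2; exact: (@uniq_od3 n j.+1). Qed.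

Lemma val_U3 n j : j.+2 <= n -> nat_of_ord (U3 n j) = j.
Proof. move=> *; apply: inordK; lia. Qed.
Lemma val_V3 n j : j.+2 <= n -> nat_of_ord (V3 n j) = j.+1.
Proof. move=> *; apply: inordK; lia. Qed.
Lemma val_W3 n j : j.+2 <= n -> nat_of_ord (W3 n j) = j.+2.
Proof. move=> *; apply: inordK; lia. Qed.

Lemma odT n j : 1 <= j -> j.+2 <= n -> outside_desc n j.+1 j.+2 = U3 n j :: O3 n j.
Proof. move=> H1 H2; exact: (@od_T n j.+1). Qed.

Lemma odU n j : 1 <= j -> j.+2 <= n -> outside_desc n j j.+1 = rcons (O3 n j) (W3 n j).
Proof. move=> H1 H2; exact: (@od_U n j.+1). Qed.

Lemma classify3 n j (r : 'I_n.+1) : 1 <= j -> j.+2 <= n ->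
  [\/ r = U3 n j, r = V3 n j, r = W3 n j | r \in O3 n j].
Proof. move=> H1 H2; exact: (@classify n j.+1 r). Qed.

Lemma inT_out n j (t : 'I_n.+1) : 1 <= j -> j.+2 <= n -> t \in O3 n j ->
  ~~ inside j.+1 j.+2 t.
Proof. by move=> H1 H2; rewrite mem_O3 // /inside; lia. Qed.
Lemma inU_out n j (t : 'I_n.+1) : 1 <= j -> j.+2 <= n -> t \in O3 n j ->
  ~~ inside j j.+1 t.
Proof. by move=> H1 H2; rewrite mem_O3 // /inside; lia. Qed.
Lemma inT_U n j : j.+2 <= n -> ~~ inside j.+1 j.+2 (U3 n j).
Proof. by move=> H2; rewrite /inside val_U3 //; lia. Qed.
Lemma inU_W n j : j.+2 <= n -> ~~ inside j j.+1 (W3 n j).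
Proof. by move=> H2; rewrite /inside val_W3 //; lia. Qed.

Lemma UO n j : 1 <= j -> j.+2 <= n -> U3 n j \notin O3 n j.
Proof. by move=> H1 H2; rewrite mem_O3 // val_U3 //; lia. Qed.
Lemma VO n j : 1 <= j -> j.+2 <= n -> V3 n j \notin O3 n j.
Proof. by move=> H1 H2; rewrite mem_O3 // val_V3 //; lia. Qed.
Lemma WO n j : 1 <= j -> j.+2 <= n -> W3 n j \notin O3 n j.
Proof. by move=> H1 H2; rewrite mem_O3 // val_W3 //; lia. Qed.

Lemma UV n j : j.+2 <= n -> (U3 n j == V3 n j) = false.
Proof. by move=> H; apply/negbTE; rewrite -(inj_eq val_inj) /= val_U3 // val_V3 //; lia. Qed.
Lemma UW n j : j.+2 <= n -> (U3 n j == W3 n j) = false.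
Proof. by move=> H; apply/negbTE; rewrite -(inj_eq val_inj) /= val_U3 // val_W3 //; lia. Qed.
Lemma VW n j : j.+2 <= n -> (V3 n j == W3 n j) = false.
Proof. by move=> H; apply/negbTE; rewrite -(inj_eq val_inj) /= val_V3 // val_W3 //; lia. Qed.

Lemma Fl_count (T : eqType) (L R : seq T) f : uniq L -> fsorted L R ->
  (forall t, t \in L -> f t = count_mem t R) -> Fl L f = R.
Proof.
move=> U HR Hf; rewrite [RHS](fsortedE U HR); exact: Fl_eq_in.
Qed.

Lemma fsorted_mem (T : eqType) (L R : seq T) t : fsorted L R -> t \in R -> t \in L.
Proof. by case=> f -> /Fl_mem. Qed.

Lemma count_take_nseq (T : eqType) (t x : T) k e R : x != t ->
  count_mem t (take k (nseq e x ++ R)) = count_mem t (take (k - e) R).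
Proof.
move=> H; rewrite take_cat' count_cat take_nseq' count_nseq size_nseq /=.
by rewrite (negPf H) mul0n.
Qed.

Lemma count_drop_nseq (T : eqType) (t x : T) k e R : x != t ->
  count_mem t (drop k (nseq e x ++ R)) = count_mem t (drop (k - e) R).
Proof.
move=> H; rewrite drop_cat' count_cat drop_nseq count_nseq size_nseq /=.
by rewrite (negPf H) mul0n.
Qed.

Lemma count0_notin (T : eqType) (x : T) (R : seq T) : x \notin R -> count_mem x R = 0.
Proof. by move/count_memPn. Qed.

Lemma notin_take (T : eqType) (x : T) k (R : seq T) : x \notin R -> x \notin take k R.
Proof. by apply: contra => /mem_take. Qed.
Lemma notin_drop (T : eqType) (x : T) k (R : seq T) : x \notin R -> x \notin drop k R.
Proof. by apply: contra => /mem_drop. Qed.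

Lemma count_take_self (T : eqType) (x : T) k e R : x \notin R ->
  count_mem x (take k (nseq e x ++ R)) = minn k e.
Proof.
move=> H; rewrite take_cat' count_cat take_nseq' count_nseq size_nseq /= eqxx mul1n.
by rewrite count0_notin ?addn0 // notin_take.
Qed.

Lemma count_drop_self (T : eqType) (x : T) k e R : x \notin R ->
  count_mem x (drop k (nseq e x ++ R)) = e - k.
Proof.
move=> H; rewrite drop_cat' count_cat drop_nseq count_nseq size_nseq /= eqxx mul1n.
by rewrite count0_notin ?addn0 // notin_drop.
Qed.

Record Inv n j (m : {ffun 'I_n.+1 * 'I_n.+1 -> nat}) (Q : seq 'I_n.+1)
    (a b c x y z : nat) : Prop := MkInv {
  iU : forall t, t \in O3 n j -> m (U3 n j, t) = count_mem t (take a Q);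
  iUr : forall t, t \in O3 n j -> m (t, U3 n j) = count_mem t (take a Q);
  iV : forall t, t \in O3 n j -> m (V3 n j, t) = count_mem t (take b (drop a Q));
  iVr : forall t, t \in O3 n j -> m (t, V3 n j) = count_mem t (take b (drop a Q));
  iW : forall t, t \in O3 n j -> m (W3 n j, t) = count_mem t (drop (a + b) Q);
  iWr : forall t, t \in O3 n j -> m (t, W3 n j) = count_mem t (drop (a + b) Q);
  iUV : m (U3 n j, V3 n j) = x; iVU : m (V3 n j, U3 n j) = x;
  iVW : m (V3 n j, W3 n j) = y; iWV : m (W3 n j, V3 n j) = y;
  iUW : m (U3 n j, W3 n j) = z; iWU : m (W3 n j, U3 n j) = z;
  iUU : m (U3 n j, U3 n j) = 0; iVV : m (V3 n j, V3 n j) = 0;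
  iWW : m (W3 n j, W3 n j) = 0;
  iS : a + b + c = size Q;
  iZ : 0 < z -> b = 0 }.


Lemma stepT n j (D : diagram n) Q a b c x y z : 1 <= j -> j.+2 <= n ->
  fsorted (O3 n j) Q -> @Inv n j (darc D) Q a b c x y z ->
  @Inv n j (darc (act j.+1 j.+2 D)) Q a (c - x) (b + c - (c - x))
      (minn (z + c) (x + z)) y (x - c).
Proof.
move=> H1 H2 HQ I.
have UL := uniq_O3 H1 H2.
have HUQ : forall k, U3 n j \notin drop k Q.
  by move=> k; apply: notin_drop; apply: contra (UO H1 H2); exact: fsorted_mem.
have E1 : SPo j.+1 (darc D) (inord j.+1) = nseq x (U3 n j) ++ take b (drop a Q).
  rewrite /SPo odT // Fl_cons; congr (_ ++ _); first by rewrite (iVU I).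
  apply: Fl_count => //; first by apply: fsorted_take => //; apply: fsorted_drop.
  exact: (iV I).
have E2 : SPo j.+1 (darc D) (inord j.+2) = nseq z (U3 n j) ++ drop (a + b) Q.
  rewrite /SPo odT // Fl_cons; congr (_ ++ _); first by rewrite (iWU I).
  apply: Fl_count => //; first by apply: fsorted_drop.
  exact: (iW I).
have ES : Sfull j.+1 D = nseq (x + z) (U3 n j) ++ drop a Q.
  rewrite /Sfull E1 E2.
  case: (posnP z) => Hz.
    by rewrite Hz addn0 /= -catA addnC -drop_drop cat_take_drop.
  by rewrite (iZ I Hz) take0 cats0 addn0 nseqD catA.
have EB : beta j.+1 D = z + c.
  rewrite /beta E2 size_cat size_nseq size_drop -(iS I); lia.
have inV : inside j.+1 j.+2 (V3 n j) := inside_P H2.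
have inW : inside j.+1 j.+2 (W3 n j) := inside_P1 H2.
have oU := inT_U H2.
have UV := UV H2; have UW := UW H2; have VW := VW H2.
have Ht0 : forall t, t \in O3 n j -> U3 n j != t.
  by move=> t Ht; apply: contraNneq (UO H1 H2) => ->.
apply: MkInv.
- move=> t Ht; rewrite (act_out D oU (inT_out H1 H2 Ht)); exact: (iU I Ht).
- move=> t Ht; rewrite (act_out D (inT_out H1 H2 Ht) oU); exact: (iUr I Ht).
- move=> t Ht; rewrite (act_crossP D H2 (inT_out H1 H2 Ht)).1 ES EB.
  by rewrite count_take_nseq ?Ht0 //; congr (count_mem t (take _ _)); lia.
- move=> t Ht; rewrite (act_crossP D H2 (inT_out H1 H2 Ht)).2 ES EB.
  by rewrite count_take_nseq ?Ht0 //; congr (count_mem t (take _ _)); lia.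
- move=> t Ht; rewrite (act_crossP1 D H2 (inT_out H1 H2 Ht)).1 ES EB.
  by rewrite count_drop_nseq ?Ht0 // drop_drop; congr (count_mem t (drop _ _)); lia.
- move=> t Ht; rewrite (act_crossP1 D H2 (inT_out H1 H2 Ht)).2 ES EB.
  by rewrite count_drop_nseq ?Ht0 // drop_drop; congr (count_mem t (drop _ _)); lia.
- by rewrite (act_crossP D H2 oU).2 ES EB count_take_self.
- by rewrite (act_crossP D H2 oU).1 ES EB count_take_self.
- by rewrite act_in // refl_P // refl_P1 // (iWV I).
- by rewrite act_in // refl_P // refl_P1 // (iVW I).
- by rewrite (act_crossP1 D H2 oU).2 ES EB count_drop_self //; lia.
- by rewrite (act_crossP1 D H2 oU).1 ES EB count_drop_self //; lia.
- by rewrite act_out // (iUU I).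
- by rewrite act_in // refl_P // (iWW I).
- by rewrite act_in // refl_P1 // (iVV I).
- rewrite -(iS I); lia.
- lia.
Qed.

Lemma drop_take_min (T : Type) k j (s : seq T) :
  drop k (take j s) = take (j - k) (drop (minn k j) s).
Proof.
case: (leqP k j) => H.
  by rewrite take_drop subnK.
have -> : j - k = 0 by lia.
rewrite take0 drop_oversize // size_take_min; lia.
Qed.

Lemma count_take_catn (T : eqType) (t x : T) k e R : x != t ->
  count_mem t (take k (R ++ nseq e x)) = count_mem t (take k R).
Proof.
move=> H; rewrite take_cat' count_cat take_nseq' count_nseq.
by rewrite /= (negPf H) mul0n addn0.
Qed.

Lemma count_drop_catn (T : eqType) (t x : T) k e R : x != t ->
  count_mem t (drop k (R ++ nseq e x)) = count_mem t (drop k R).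
Proof.
move=> H; rewrite drop_cat' count_cat drop_nseq count_nseq.
by rewrite /= (negPf H) mul0n addn0.
Qed.

Lemma count_take_catself (T : eqType) (x : T) k e R : x \notin R ->
  count_mem x (take k (R ++ nseq e x)) = minn (k - size R) e.
Proof.
move=> H; rewrite take_cat' count_cat take_nseq' count_nseq /= eqxx mul1n.
by rewrite count0_notin ?notin_take.
Qed.

Lemma count_drop_catself (T : eqType) (x : T) k e R : x \notin R ->
  count_mem x (drop k (R ++ nseq e x)) = e - (k - size R).
Proof.
move=> H; rewrite drop_cat' count_cat drop_nseq count_nseq /= eqxx mul1n.
by rewrite count0_notin ?notin_drop.
Qed.

Lemma Fl_rcons (T : eqType) (L : seq T) x f :
  Fl (rcons L x) f = Fl L f ++ nseq (f x) x.
Proof. by rewrite /Fl map_rcons -cats1 flatten_cat /= cats0. Qed.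

Lemma stepU n j (D : diagram n) Q a b c x y z : 1 <= j -> j.+2 <= n ->
  fsorted (O3 n j) Q -> @Inv n j (darc D) Q a b c x y z ->
  @Inv n j (darc (act j j.+1 D)) Q (minn (b + y) (a + b)) ((a + b) - (b + y)) c
      x ((z + y) - ((b + y) - (a + b))) ((b + y) - (a + b)).
Proof.
move=> H1 H2 HQ I.
have UL := uniq_O3 H1 H2.
have H2' : j.+1 <= n by lia.
have HWQ : forall k, W3 n j \notin take k Q.
  by move=> k; apply: notin_take; apply: contra (WO H1 H2); exact: fsorted_mem.
have E1 : SPo j (darc D) (inord j) = take a Q ++ nseq z (W3 n j).
  rewrite /SPo odU // Fl_rcons; congr (_ ++ _); last by rewrite (iUW I).
  apply: Fl_count => //; first by apply: fsorted_take.
  exact: (iU I).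
have E2 : SPo j (darc D) (inord j.+1) = take b (drop a Q) ++ nseq y (W3 n j).
  rewrite /SPo odU // Fl_rcons; congr (_ ++ _); last by rewrite (iVW I).
  apply: Fl_count => //; first by apply: fsorted_take => //; apply: fsorted_drop.
  exact: (iV I).
have ES : Sfull j D = take (a + b) Q ++ nseq (z + y) (W3 n j).
  rewrite /Sfull E1 E2 takeD.
  case: (posnP z) => Hz.
    by rewrite Hz /= -!catA.
  by rewrite (iZ I Hz) take0 cats0 nseqD /= -!catA.
have ST : size (take (a + b) Q) = a + b.
  rewrite size_take_min -(iS I); lia.
have EB : beta j D = b + y.
  rewrite /beta E2 size_cat size_nseq size_take_min size_drop -(iS I); lia.
have inU : inside j j.+1 (U3 n j) := inside_P H2'.
have inV : inside j j.+1 (V3 n j) := inside_P1 H2'.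
have oW := inU_W H2.
have Ht0 : forall t, t \in O3 n j -> W3 n j != t.
  by move=> t Ht; apply: contraNneq (WO H1 H2) => ->.
apply: MkInv.
- move=> t Ht; rewrite (act_crossP D H2' (inU_out H1 H2 Ht)).1 ES EB.
  by rewrite count_take_catn ?Ht0 // -take_min.
- move=> t Ht; rewrite (act_crossP D H2' (inU_out H1 H2 Ht)).2 ES EB.
  by rewrite count_take_catn ?Ht0 // -take_min.
- move=> t Ht; rewrite (act_crossP1 D H2' (inU_out H1 H2 Ht)).1 ES EB.
  by rewrite count_drop_catn ?Ht0 // drop_take_min.
- move=> t Ht; rewrite (act_crossP1 D H2' (inU_out H1 H2 Ht)).2 ES EB.
  by rewrite count_drop_catn ?Ht0 // drop_take_min.
- move=> t Ht; rewrite (act_out D oW (inU_out H1 H2 Ht)) (iW I Ht).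
  by congr (count_mem t (drop _ _)); lia.
- move=> t Ht; rewrite (act_out D (inU_out H1 H2 Ht) oW) (iWr I Ht).
  by congr (count_mem t (drop _ _)); lia.
- by rewrite act_in // refl_P // refl_P1 // (iVU I).
- by rewrite act_in // refl_P // refl_P1 // (iUV I).
- by rewrite (act_crossP1 D H2' oW).1 ES EB count_drop_catself // ST.
- by rewrite (act_crossP1 D H2' oW).2 ES EB count_drop_catself // ST.
- by rewrite (act_crossP D H2' oW).1 ES EB count_take_catself // ST; lia.
- by rewrite (act_crossP D H2' oW).2 ES EB count_take_catself // ST; lia.
- by rewrite act_in // refl_P // (iVV I).
- by rewrite act_in // refl_P1 // (iUU I).
- by rewrite act_out // (iWW I).
- rewrite -(iS I); lia.
- lia.
Qed.


Lemma pairwise_rev (T : Type) (r : rel T) (s : seq T) :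
  pairwise r (rev s) = pairwise (fun x y => r y x) s.
Proof.
elim: s => //= x s IH.
by rewrite rev_cons pairwise_rcons IH all_rev.
Qed.

Lemma sorted_filter_enum n (p : pred 'I_n.+1) :
  pairwise (fun a b : 'I_n.+1 => (a < b)%N) (filter p (enum 'I_n.+1)).
Proof.
have Htr : transitive (fun a b : 'I_n.+1 => (a < b)%N).
  by move=> a b c; apply: ltn_trans.
rewrite -(sorted_pairwise Htr); apply: sorted_filter => //.
have := iota_ltn_sorted 0 n.+1; rewrite -val_enum_ord sorted_map.
by [].
Qed.

Lemma pw_O3_gen n j (r : rel 'I_n.+1) :
  (forall t t' : 'I_n.+1, t' < t < j -> r t t') ->
  (forall t t' : 'I_n.+1, t < j -> j.+2 < t' -> r t t') ->
  (forall t t' : 'I_n.+1, j.+2 < t' < t -> r t t') ->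
  pairwise r (O3 n j).
Proof.
move=> Hi Hii Hiii.
rewrite /O3 /outside_desc rev_cat pairwise_cat !pairwise_rev.
apply/and3P; split.
- apply/allrelP => t t'; rewrite !mem_rev !mem_filter => /andP[Ht _] /andP[Ht' _].
  exact: Hii.
- apply: (@sub_in_pairwise _ (mem (filter (fun y : 'I_n.+1 => y < j) (enum 'I_n.+1)))
      (fun a b : 'I_n.+1 => (a < b)%N)); last exact: sorted_filter_enum.
  + move=> t t'; rewrite !mem_filter => /andP[Ht _] /andP[Ht' _] Htt'.
    apply: Hi; lia.
  + by apply/allP.
- apply: (@sub_in_pairwise _ (mem (filter (fun y : 'I_n.+1 => j.+2 < y) (enum 'I_n.+1)))
      (fun a b : 'I_n.+1 => (a < b)%N)); last exact: sorted_filter_enum.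
  + move=> t t'; rewrite !mem_filter => /andP[Ht _] /andP[Ht' _] Htt'.
    apply: Hiii; lia.
  + by apply/allP.
Qed.

Definition symm n (m : {ffun 'I_n.+1 * 'I_n.+1 -> nat}) := forall a b, m (a, b) = m (b, a).
Definition noncr n (m : {ffun 'I_n.+1 * 'I_n.+1 -> nat}) :=
  forall a b c d : 'I_n.+1, a < b -> b < c -> c < d -> m (a, c) = 0 \/ m (b, d) = 0.

Lemma crossPR n (m : {ffun 'I_n.+1 * 'I_n.+1 -> nat}) (P R t t' : 'I_n.+1) :
  symm m -> noncr m -> P < R ->
  (t' < t < P) \/ (t < P /\ R < t') \/ (R < t' < t) ->
  m (R, t) = 0 \/ m (P, t') = 0.
Proof.
move=> Hs Hn HPR [/andP[H1 H2]|[[H1 H2]|/andP[H1 H2]]].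
- have [E|E] := Hn t' t P R H1 H2 HPR.
    by right; rewrite Hs.
  by left; rewrite Hs.
- have [E|E] := Hn t P R t' H1 HPR H2.
    by left; rewrite Hs.
  by right.
- have [E|E] := Hn P R t' t HPR H1 H2.
    by right.
  by left.
Qed.

Definition Qf n j (m : {ffun 'I_n.+1 * 'I_n.+1 -> nat}) (P : 'I_n.+1) :=
  Fl (O3 n j) (fun t => m (P, t)).

Lemma pw_pair n j (m : {ffun 'I_n.+1 * 'I_n.+1 -> nat}) (P R : 'I_n.+1) :
  symm m -> noncr m -> j <= P -> P < R -> R <= j.+2 ->
  forall t t' : 'I_n.+1,
   [\/ t' < t < j, t < j /\ j.+2 < t' | j.+2 < t' < t] ->
   m (R, t) = 0 \/ m (P, t') = 0.
Proof.
move=> Hs Hn H1 H2 H3 t t' Hc; apply: crossPR => //.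
case: Hc => [H|[Ha Hb]|H].
- by left; lia.
- by right; left; split; lia.
- by right; right; lia.
Qed.

Lemma initInv n j (m : {ffun 'I_n.+1 * 'I_n.+1 -> nat}) : 1 <= j -> j.+2 <= n ->
  symm m -> noncr m -> (forall a, m (a, a) = 0) ->
  fsorted (O3 n j) (Qf j m (U3 n j) ++ Qf j m (V3 n j) ++ Qf j m (W3 n j)) /\
  @Inv n j m (Qf j m (U3 n j) ++ Qf j m (V3 n j) ++ Qf j m (W3 n j))
    (size (Qf j m (U3 n j))) (size (Qf j m (V3 n j))) (size (Qf j m (W3 n j)))
    (m (U3 n j, V3 n j)) (m (V3 n j, W3 n j)) (m (U3 n j, W3 n j)).
Proof.
move=> H1 H2 Hs Hn Hd.
have UL := uniq_O3 H1 H2.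
have vU := val_U3 H2; have vV := val_V3 H2; have vW := val_W3 H2.
have PW : forall P R : 'I_n.+1, j <= P -> P < R -> R <= j.+2 ->
   forall t t' : 'I_n.+1, [\/ t' < t < j, t < j /\ j.+2 < t' | j.+2 < t' < t] ->
   m (R, t) = 0 \/ m (P, t') = 0.
  by move=> P R HP HPR HR; apply: pw_pair.
split.
  rewrite catA /Qf Fl_merge; last first.
    apply: pw_O3_gen => [t t' Htt'|t t' Ha Hb|t t' Htt'].
    + by case: (PW (U3 n j) (V3 n j) ltac:(lia) ltac:(lia) ltac:(lia) t t' (Or31 _ _ Htt')) => ->; rewrite eqxx ?orbT.
    + by case: (PW (U3 n j) (V3 n j) ltac:(lia) ltac:(lia) ltac:(lia) t t' (Or32 _ _ (conj Ha Hb))) => ->; rewrite eqxx ?orbT.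
    + by case: (PW (U3 n j) (V3 n j) ltac:(lia) ltac:(lia) ltac:(lia) t t' (Or33 _ _ Htt')) => ->; rewrite eqxx ?orbT.
  rewrite Fl_merge; first by eexists.
  apply: pw_O3_gen => [t t' C|t t' Ha Hb|t t' C].
  + have C' : [\/ t' < t < j, t < j /\ j.+2 < t' | j.+2 < t' < t] by apply: Or31.
    case: (PW (U3 n j) (W3 n j) ltac:(lia) ltac:(lia) ltac:(lia) t t' C') => ->; rewrite ?eqxx //.
    by case: (PW (V3 n j) (W3 n j) ltac:(lia) ltac:(lia) ltac:(lia) t t' C') => ->; rewrite ?eqxx ?addn0 ?orbT.
  + have C' : [\/ t' < t < j, t < j /\ j.+2 < t' | j.+2 < t' < t] by apply: Or32.
    case: (PW (U3 n j) (W3 n j) ltac:(lia) ltac:(lia) ltac:(lia) t t' C') => ->; rewrite ?eqxx //.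
    by case: (PW (V3 n j) (W3 n j) ltac:(lia) ltac:(lia) ltac:(lia) t t' C') => ->; rewrite ?eqxx ?addn0 ?orbT.
  + have C' : [\/ t' < t < j, t < j /\ j.+2 < t' | j.+2 < t' < t] by apply: Or33.
    case: (PW (U3 n j) (W3 n j) ltac:(lia) ltac:(lia) ltac:(lia) t t' C') => ->; rewrite ?eqxx //.
    by case: (PW (V3 n j) (W3 n j) ltac:(lia) ltac:(lia) ltac:(lia) t t' C') => ->; rewrite ?eqxx ?addn0 ?orbT.
apply: MkInv.
- by move=> t Ht; rewrite take_size_cat // /Qf count_Fl // Ht.
- by move=> t Ht; rewrite Hs take_size_cat // /Qf count_Fl // Ht.
- by move=> t Ht; rewrite drop_size_cat // take_size_cat // /Qf count_Fl // Ht.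
- by move=> t Ht; rewrite Hs drop_size_cat // take_size_cat // /Qf count_Fl // Ht.
- by move=> t Ht; rewrite catA -size_cat drop_size_cat // /Qf count_Fl // Ht.
- by move=> t Ht; rewrite Hs catA -size_cat drop_size_cat // /Qf count_Fl // Ht.
- by [].
- by rewrite Hs.
- by [].
- by rewrite Hs.
- by [].
- by rewrite Hs.
- exact: Hd.
- exact: Hd.
- exact: Hd.
- by rewrite !size_cat addnA.
- move=> Hz; apply/eqP; rewrite size_eq0; apply/eqP; apply: Fl_zero => t.
  rewrite mem_O3 // => /orP[Ht|Ht].
  + have [E|E] := Hn t (U3 n j) (V3 n j) (W3 n j) ltac:(lia) ltac:(lia) ltac:(lia).
      by rewrite Hs.
    by rewrite E in Hz.
  + have [E|E] := Hn (U3 n j) (V3 n j) (W3 n j) t ltac:(lia) ltac:(lia) ltac:(lia).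
      by rewrite E in Hz.
    by [].
Qed.


Lemma Inv_unique n j (m1 m2 : {ffun 'I_n.+1 * 'I_n.+1 -> nat}) Q
    a b c x y z a' b' c' x' y' z' : 1 <= j -> j.+2 <= n ->
  @Inv n j m1 Q a b c x y z -> @Inv n j m2 Q a' b' c' x' y' z' ->
  a = a' -> b = b' -> x = x' -> y = y' -> z = z' ->
  (forall r s, r \in O3 n j -> s \in O3 n j -> m1 (r, s) = m2 (r, s)) ->
  m1 = m2.
Proof.
move=> H1 H2 I1 I2 Ea Eb Ex Ey Ez HO; subst.
apply/ffunP => -[r s].
case: (classify3 r H1 H2) => [->|->|->|Hr];
case: (classify3 s H1 H2) => [->|->|->|Hs];
rewrite ?(iUU I1) ?(iUU I2) ?(iVV I1) ?(iVV I2) ?(iWW I1) ?(iWW I2)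
  ?(iUV I1) ?(iUV I2) ?(iVU I1) ?(iVU I2) ?(iVW I1) ?(iVW I2) ?(iWV I1) ?(iWV I2)
  ?(iUW I1) ?(iUW I2) ?(iWU I1) ?(iWU I2) //;
rewrite ?(iU I1 Hs) ?(iU I2 Hs) ?(iV I1 Hs) ?(iV I2 Hs) ?(iW I1 Hs) ?(iW I2 Hs)
  ?(iUr I1 Hr) ?(iUr I2 Hr) ?(iVr I1 Hr) ?(iVr I2 Hr) ?(iWr I1 Hr) ?(iWr I2 Hr) //.
exact: HO.
Qed.

Lemma diagram_eq n (D1 D2 : diagram n) : dlab D1 = dlab D2 -> darc D1 = darc D2 -> D1 = D2.
Proof. by case: D1 => [? ?]; case: D2 => [? ?] /= -> ->. Qed.

Lemma actT_out n j (D : diagram n) r s : 1 <= j -> j.+2 <= n -> r \in O3 n j -> s \in O3 n j ->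
  darc (act j.+1 j.+2 D) (r, s) = darc D (r, s).
Proof. by move=> H1 H2 Hr Hs; rewrite act_out // inT_out. Qed.
Lemma actU_out n j (D : diagram n) r s : 1 <= j -> j.+2 <= n -> r \in O3 n j -> s \in O3 n j ->
  darc (act j j.+1 D) (r, s) = darc D (r, s).
Proof. by move=> H1 H2 Hr Hs; rewrite act_out // inU_out. Qed.

Lemma reflT_U n j : j.+2 <= n -> refl j.+1 j.+2 (U3 n j) = U3 n j.
Proof. by move=> H; rewrite refl_out // inT_U. Qed.
Lemma reflT_V n j : j.+2 <= n -> refl j.+1 j.+2 (V3 n j) = W3 n j.
Proof. by move=> H; apply: refl_P. Qed.
Lemma reflT_W n j : j.+2 <= n -> refl j.+1 j.+2 (W3 n j) = V3 n j.
Proof. by move=> H; apply: refl_P1. Qed.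
Lemma reflU_U n j : j.+2 <= n -> refl j j.+1 (U3 n j) = V3 n j.
Proof. by move=> H; apply: refl_P; lia. Qed.
Lemma reflU_V n j : j.+2 <= n -> refl j j.+1 (V3 n j) = U3 n j.
Proof. by move=> H; apply: refl_P1; lia. Qed.
Lemma reflU_W n j : j.+2 <= n -> refl j j.+1 (W3 n j) = W3 n j.
Proof. by move=> H; rewrite refl_out // inU_W. Qed.
Lemma reflT_O n j t : 1 <= j -> j.+2 <= n -> t \in O3 n j -> refl j.+1 j.+2 t = t.
Proof. by move=> H1 H2 Ht; rewrite refl_out // inT_out. Qed.
Lemma reflU_O n j t : 1 <= j -> j.+2 <= n -> t \in O3 n j -> refl j j.+1 t = t.
Proof. by move=> H1 H2 Ht; rewrite refl_out // inU_out. Qed.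


Unset Implicit Arguments.

Theorem mainTheorem15 (n : nat) (l : 'I_n.+1 -> nat) (i : nat) (D : diagram n) :
  (3 <= n)%N -> (2 <= i <= n.-1)%N -> is_diagram l D ->
  act i i.+1 (act i.-1 i (act i i.+1 D)) = act i.-1 i (act i i.+1 (act i.-1 i D)).
Proof.
move=> Hn Hi HD.
case: i Hi => [|j] Hi; first by exfalso; lia.
rewrite [j.+1.-1]/=.
have H1 : 1 <= j by lia.
have H2 : j.+2 <= n by lia.
case: HD => _ [_ [Hsym Hdiag Hnc _]].
have [HQ I0] := initInv H1 H2 Hsym Hnc Hdiag.
have I1 := stepT H1 H2 HQ I0.
have I2 := stepU H1 H2 HQ I1.
have I3 := stepT H1 H2 HQ I2.
have J1 := stepU H1 H2 HQ I0.
have J2 := stepT H1 H2 HQ J1.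
have J3 := stepU H1 H2 HQ J2.
have Z := iZ I0.
apply: diagram_eq.
  apply/ffunP => x0; rewrite !act_lab.
  case: (classify3 x0 H1 H2) => [->|->|->|Hx].
  - by rewrite !(reflT_U H2, reflT_V H2, reflT_W H2, reflU_U H2, reflU_V H2, reflU_W H2).
  - by rewrite !(reflT_U H2, reflT_V H2, reflT_W H2, reflU_U H2, reflU_V H2, reflU_W H2).
  - by rewrite !(reflT_U H2, reflT_V H2, reflT_W H2, reflU_U H2, reflU_V H2, reflU_W H2).
  - by rewrite !(reflT_O H1 H2 Hx, reflU_O H1 H2 Hx).
apply: (Inv_unique H1 H2 I3 J3).
move: Z.
set a := size (Qf j (darc D) (U3 n j)).
set b := size (Qf j (darc D) (V3 n j)).
set c := size (Qf j (darc D) (W3 n j)).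
set x := darc D (U3 n j, V3 n j).
set y := darc D (V3 n j, W3 n j).
set z := darc D (U3 n j, W3 n j).
move=> Z.
lia. lia. lia. lia. lia.
move=> r s Hr Hs.
apply: (etrans (actT_out (act j j.+1 (act j.+1 j.+2 D)) H1 H2 Hr Hs)).
apply: (etrans (actU_out (act j.+1 j.+2 D) H1 H2 Hr Hs)).
apply: (etrans (actT_out D H1 H2 Hr Hs)).
apply: esym.
apply: (etrans (actU_out (act j.+1 j.+2 (act j j.+1 D)) H1 H2 Hr Hs)).
apply: (etrans (actT_out (act j j.+1 D) H1 H2 Hr Hs)).
exact: (actU_out D H1 H2 Hr Hs).
Qed.
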